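(* Let $X$ and $Y$ be complex Banach spaces and $\mathcal{A}=L(Y)$ the algebra of bounded linear operators on $Y$. Let $\mathcal{F}=\{F_t\}_{t\ge0}$ be a semigroup of holomorphic self-mappings of a domain $\mathcal{D}\subset X$, and let $\{\Gamma_t\}_{t\ge0}$ be a family of holomorphic maps $\mathcal{D}\to\mathcal{A}$. Then $\{\Gamma_t\}_{t\ge0}$ is a semicocycle over $\mathcal{F}$ if and only if the family $\widetilde{\mathcal F}=\{\widetilde F_t\}_{t\ge0}$, $\widetilde F_t(x,y)=(F_t(x),\Gamma_t(x)y)$, is a semigroup on the domain $\mathcal{D}\times Y$. If, in addition, there are a biholomorphic map $h$ of $\mathcal{D}$ onto $h(\mathcal{D})\subset X$ and a bounded linear operator $A$ on $X$ with $F_t(x)=h^{-1}(e^{tA}h(x))$ for all $t\ge0$, $x\in\mathcal{D}$, and there are a holomorphic $M:\mathcal{D}\to\mathcal{A}_*$ and $B_0\in\mathcal{A}$ with $\Gamma_t(x)=M(F_t(x))^{-1}e^{tB_0}M(x)$ for all $t,x$, then $\widetilde{\mathcal F}$ is linearized by $\widetilde h(x,y)=(h(x),M(x)y)$, i.e. $\widetilde F_t(x,y)=\widetilde h^{-1}\big(e^{tA}h(x),\,e^{tB_0}M(x)y\big)$ for all $t\ge0$, $(x,y)\in\mathcal{D}\times Y$.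
   Context: $\mathcal{A}_*$ denotes the invertible elements of $\mathcal{A}$. A semigroup on a domain $\Omega$ is a family $\{G_t\}_{t\ge0}$ of holomorphic self-maps of $\Omega$ with $G_{t+s}=G_t\circ G_s$ for $t,s\ge0$ and $G_t(w)\to w$ as $t\to0^+$ for each $w\in\Omega$. A semicocycle over $\mathcal{F}$ is a family $\{\Gamma_t\}_{t\ge0}$ of holomorphic maps $\mathcal{D}\to\mathcal{A}$ with $\Gamma_t(F_s(x))\Gamma_s(x)=\Gamma_{t+s}(x)$ for all $t,s\ge0$, $x\in\mathcal{D}$, and $\Gamma_t(x)\to\mathrm{Id}_Y$ as $t\to0^+$ for each $x$. *)

(* Defs.v *)
From HB Require Import structures.
From mathcomp Require Import all_boot all_order all_algebra.
From mathcomp Require Import all_classical all_reals all_analysis.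
From mathcomp Require Export complex.
Import Order.TTheory GRing.Theory Num.Theory.
Import numFieldNormedType.Exports.
Local Open Scope ring_scope.
Local Open Scope classical_set_scope.

Set Implicit Arguments.
Unset Strict Implicit.
Unset Printing Implicit Defensive.

Section Defs.
Context {R : realType}.

Definition holo {V W : normedModType R[i]} (D : set V) (f : V -> W) : Prop :=
  forall x, D x -> differentiable f x.

Definition domain {V : normedModType R[i]} (D : set V) : Prop :=
  open D /\ connected D /\ D !=set0.

Definition is_semigroup {V : normedModType R[i]} (Om : set V)
    (G : R -> V -> V) : Prop :=
  (forall t, 0 <= t -> holo Om (G t) /\ (forall w, Om w -> Om (G t w))) /\
  (forall t s, 0 <= t -> 0 <= s -> forall w, Om w -> G (t + s) w = G t (G s w)) /\
  (forall w, Om w -> G t w @[t --> 0^'+] --> w).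

Definition bounded_op {Y : normedModType R[i]} (T : Y -> Y) : Prop :=
  (forall (a : R[i]) (u v : Y), T (a *: u + v) = a *: T u + T v) /\
  (exists C : R[i], forall y, `|T y| <= C * `|y|).

(* G : D -> L(Y) (operators represented as functions Y -> Y) is holomorphic:
   G x is in L(Y) for x in D and G is Frechet differentiable in operator norm,
   with a derivative L in L(X, L(Y)).  The operator-norm estimate
   ||G(x0+h) - G(x0) - L h||_op <= e ||h|| is written out pointwise in y. *)
Definition holo_op {X Y : normedModType R[i]} (D : set X) (G : X -> Y -> Y)
  : Prop :=
  forall x0, D x0 ->
    bounded_op (G x0) /\
    exists L : X -> Y -> Y,
      (forall h, bounded_op (L h)) /\
      (forall (a : R[i]) (h k : X) (y : Y), L (a *: h + k) y = a *: L h y + L k y) /\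
      (exists C : R[i], forall h y, `|L h y| <= C * `|h| * `|y|) /\
      (forall e : R[i], 0 < e -> exists2 d : R[i], 0 < d &
         forall h, `|h| < d -> forall y,
           `|G (x0 + h) y - G x0 y - L h y| <= e * `|h| * `|y|).

(* semicocycle over F (Gamma_t(x) -> Id in the strong operator topology) *)
Definition semicocycle {X Y : normedModType R[i]} (D : set X)
    (F : R -> X -> X) (Gam : R -> X -> Y -> Y) : Prop :=
  (forall t, 0 <= t -> holo_op D (Gam t)) /\
  (forall t s, 0 <= t -> 0 <= s -> forall x, D x -> forall y,
      Gam t (F s x) (Gam s x y) = Gam (t + s) x y) /\
  (forall x, D x -> forall y, Gam t x y @[t --> 0^'+] --> y).

Definition tildeF {X Y : normedModType R[i]} (F : R -> X -> X)
    (Gam : R -> X -> Y -> Y) (t : R) (p : X * Y) : X * Y :=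
  (F t p.1, Gam t p.1 p.2).

Definition expop {V : normedModType R[i]} (A : V -> V) (t : R) (v : V) : V :=
  limn (series (fun k : nat => ((t ^+ k / (k`!)%:R)%:C)%C *: iter k A v)).

Definition biholo {X : normedModType R[i]} (D : set X) (h hinv : X -> X) : Prop :=
  open (h @` D) /\ holo D h /\ holo (h @` D) hinv /\
  (forall x, D x -> hinv (h x) = x) /\
  (forall u, (h @` D) u -> h (hinv u) = u).

(* inverse of tilde h (x, y) = (h x, M(x) y) *)
Definition tilde_hinv {X Y : normedModType R[i]} (hinv : X -> X)
    (Minv : X -> Y -> Y) (p : X * Y) : X * Y :=
  (hinv p.1, Minv (hinv p.1) p.2).

End Defs.

(* Main.v *)
Require Import Defs.
From HB Require Import structures.
From mathcomp Require Import all_boot all_order all_algebra.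
From mathcomp Require Import all_classical all_reals all_analysis.
From mathcomp Require Import complex.
Import Order.TTheory GRing.Theory Num.Theory.
Import numFieldNormedType.Exports.
Local Open Scope ring_scope.
Local Open Scope classical_set_scope.

Lemma norm_fst_le (K : numDomainType) (U V : normedModType K) (p : U * V) :
  `|p.1| <= `|p|.
Proof. by rewrite prod_normE comparable_le_max ?real_comparable ?normr_real // lexx. Qed.
Lemma norm_snd_le (K : numDomainType) (U V : normedModType K) (p : U * V) :
  `|p.2| <= `|p|.
Proof. by rewrite prod_normE comparable_le_max ?real_comparable ?normr_real // lexx orbT. Qed.

Lemma bound_abs (K : numDomainType) (a b C : K) : a <= C * b -> 0 <= a -> 0 <= b -> a <= `|C| * b.
Proof.
move=> h a0 b0; have : 0 <= C * b by apply: le_trans h.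
move=> /ger0_norm E; by rewrite -(ger0_norm b0) -normrM E.
Qed.

Lemma diff_of (K : numFieldType) (V W : normedModType K) (f : V -> W) x
  (df : V -> W) (C : K) :
  (forall a u v, df (a *: u + v) = a *: df u + df v) ->
  0 <= C -> (forall v, `|df v| <= C * `|v|) ->
  (forall e, 0 < e -> \forall h \near 0, `|f (x + h) - f x - df h| <= e * `|h|) ->
  differentiable f x.
Proof.
move=> lin C0 bd ho.
pose dfL : {linear V -> W} := HB.pack df (GRing.isLinear.Build K V W *:%R df lin).
have cont : continuous dfL.
  apply: bounded_linear_continuous; apply/linear_boundedP.
  near=> r => v; apply: le_trans (bd v) _; apply: ler_wpM2r => //.
  near: r; apply: nbhs_pinfty_ge; exact: ger0_real.
have E : f \o shift x = cst (f x) + dfL +o_ 0 id.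
  apply/eqaddoP => e e0; have := ho e e0; apply: filterS => h /=.
  move=> H; suff -> : (f \o +%R^~ x - (cst (f x) + df)) h = f (x + h) - f x - df h by [].
  by rewrite /= !fctE [h + x]addrC opprD addrA.
by apply/diff_locallyP; rewrite (diff_unique cont E).
Unshelve. all: by end_near. Qed.

Lemma diff_fst (K : numFieldType) (U V : normedModType K) (p : U * V) :
  differentiable (@fst U V) p.
Proof.
apply: (@diff_of _ _ _ _ _ (@fst U V) 1) => //.
- by move=> v; rewrite mul1r norm_fst_le.
- move=> e e0; apply: filterE => h /=.
  by rewrite addrAC addrK subrr normr0 mulr_ge0 // ltW.
Qed.

Lemma diff_opfun (R : realType) (X Y : normedModType R[i]) (D : set X)
  (G : X -> Y -> Y) x0 y0 : holo_op D G -> D x0 ->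
  differentiable (fun p : X * Y => G p.1 p.2) (x0, y0).
Proof.
move=> HG Dx0; have [[linG [CG bG]] [L [Lb [Llin [[CL bL] est]]]]] := HG x0 Dx0.
have bL' h y : `|L h y| <= `|CL| * `|h| * `|y|.
  rewrite -mulrA; apply: bound_abs; rewrite ?mulr_ge0 //.
  by rewrite mulrA.
have bG' y : `|G x0 y| <= `|CG| * `|y| by apply: bound_abs.
have addG u v : G x0 (u + v) = G x0 u + G x0 v.
  by have := linG 1 u v; rewrite !scale1r.
have addL h u v : L h (u + v) = L h u + L h v.
  by have [linLh _] := Lb h; have := linLh 1 u v; rewrite !scale1r.
apply: (@diff_of _ _ _ _ _ (fun p => L p.1 y0 + G x0 p.2)
   (`|CL| * `|y0| + `|CG|)).
- move=> a u v /=; rewrite Llin linG scalerDr; exact: addrACA.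
- by rewrite addr_ge0 ?mulr_ge0.
- move=> v; apply: le_trans (ler_normD _ _) _; rewrite mulrDl; apply: lerD.
    apply: le_trans (bL' _ _) _; rewrite mulrAC; apply: ler_wpM2l.
      by rewrite mulr_ge0.
    exact: norm_fst_le.
  by apply: le_trans (bG' _) _; apply: ler_wpM2l => //; exact: norm_snd_le.
move=> e e0.
set c := `|y0| + 1.
have c0 : 0 < c by rewrite /c ltr_wpDl.
set C' := `|CL| + 1.
have C'0 : 0 < C' by rewrite /C' ltr_wpDl.
have e1pos : 0 < e / 2 / c by rewrite !divr_gt0.
have [d d0 estd] := est _ e1pos.
near=> p.
have hd : `|p| < d.
  near: p. exact: (@nbhs0_lt _ (X * Y)%type _ d0).
have h1 : `|p| < 1 by near: p; exact: (@nbhs0_lt _ (X * Y)%type _ ltr01).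
have h3 : `|p| < e / 2 / C'.
  by near: p; apply: (@nbhs0_lt _ (X * Y)%type); rewrite !divr_gt0.
have -> : ((x0, y0) + p).1 = x0 + p.1 by [].
have -> : ((x0, y0) + p).2 = y0 + p.2 by [].
rewrite /=.
set h := p.1; set k := p.2.
have hh : `|h| <= `|p| := (@norm_fst_le _ _ _ p).
have hk : `|k| <= `|p| := (@norm_snd_le _ _ _ p).
have -> : G (x0 + h) (y0 + k) - G x0 y0 - (L h y0 + G x0 k) =
   (G (x0 + h) (y0 + k) - G x0 (y0 + k) - L h (y0 + k)) + L h k.
  rewrite addG addL [in RHS](opprD (L h y0)) addrA subrK.
  rewrite !opprD !addrA; exact: addrAC.
apply: le_trans (ler_normD _ _) _.
rewrite [X in _ <= X * _]splitr mulrDl; apply: lerD.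
  apply: le_trans (estd h (le_lt_trans hh hd) (y0 + k)) _.
  apply: (@le_trans _ _ (e / 2 / c * `|p| * c)).
    apply: ler_pM.
    - by rewrite mulr_ge0 // ltW.
    - exact: normr_ge0.
    - by apply: ler_wpM2l => //; exact: ltW.
    apply: le_trans (ler_normD _ _) _; apply: lerD => //.
    exact: ltW (le_lt_trans hk h1).
  by rewrite mulrAC divfK // gt_eqF.
apply: le_trans (bL' h k) _.
apply: (@le_trans _ _ (C' * `|p| * `|p|)).
  apply: ler_pM; rewrite ?mulr_ge0 //.
  apply: ler_pM => //; by rewrite /C' lerDl.
apply: ler_wpM2r => //; rewrite -ler_pdivlMl // mulrC ltW.
Unshelve. all: by end_near. Qed.

Theorem proposition3p3 (R : realType) (X Y : completeNormedModType R[i])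
    (D : set X) (F : R -> X -> X) (Gam : R -> X -> Y -> Y) :
  domain D -> is_semigroup D F ->
  (forall t, 0 <= t -> holo_op D (Gam t)) ->
  (semicocycle D F Gam <-> is_semigroup (D `*` setT) (tildeF F Gam)) /\
  (forall (h hinv A : X -> X) (M Minv : X -> Y -> Y) (B0 : Y -> Y),
     biholo D h hinv -> bounded_op A ->
     holo_op D M ->
     (forall x, D x -> bounded_op (Minv x) /\
        (forall y, Minv x (M x y) = y /\ M x (Minv x y) = y)) ->
     bounded_op B0 ->
     (forall t x, 0 <= t -> D x -> F t x = hinv (expop A t (h x))) ->
     (forall t x y, 0 <= t -> D x ->
        Gam t x y = Minv (F t x) (expop B0 t (M x y))) ->
     forall t x y, 0 <= t -> D x ->
       tildeF F Gam t (x, y) = tilde_hinv hinv Minv (expop A t (h x), expop B0 t (M x y))).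
Proof.
move=> domD [Fh [Fsg Fc]] HG; split; last first.
  move=> h hinv A M Minv B0 _ _ _ _ _ HF HGam t x y t0 Dx.
  by rewrite /tildeF /tilde_hinv /= HGam // HF.
split.
- move=> [_ [coc cc]]; split; [|split].
  + move=> t t0; split.
    * move=> [x y] [/= Dx _]; rewrite /tildeF /=; apply: differentiable_pair.
      - exact: (differentiable_comp (@diff_fst _ _ _ (x, y)) ((Fh t t0).1 x Dx)).
      - exact: diff_opfun (HG t t0) Dx.
    * move=> [x y] [/= Dx _]; split => //=; exact: (Fh t t0).2 x Dx.
  + move=> t s t0 s0 [x y] [/= Dx _]; by rewrite /tildeF /= Fsg // coc.
  + move=> [x y] [/= Dx _]; rewrite /tildeF /=; apply: cvg_pair; [exact: Fc | exact: cc].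
- move=> [Th [Tsg Tc]]; split; [exact: HG | split].
  + move=> t s t0 s0 x Dx y.
    have : (D `*` setT) (x, y) by split.
    move=> /(Tsg t s t0 s0); rewrite /tildeF /=.
    by case=> _ ->.
  + move=> x Dx y; have : (D `*` setT) (x, y) by split.
    move=> /Tc H.
    exact: (cvg_comp _ _ H (@cvg_snd X Y (nbhs x) (nbhs y) _)).
Qed.
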